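(* Let $d$ be a positive integer and let $n,m$ be such that $T_{n,m}$ is nonempty. Then the set of all $d$-locally most reliable two-terminal graphs near $1$ in $T_{n,m}$ is nonempty and equals $T_{n,m}^d(m)$.
   Context: All graphs are finite, simple and undirected. A two-terminal graph is a graph $G$ together with two distinguished vertices $s,t$ (the terminals). Two two-terminal graphs are isomorphic if there is a graph isomorphism between them mapping the set of terminals onto the set of terminals. $T_{n,m}$ denotes the set of all pairwise nonisomorphic two-terminal graphs with $n$ vertices and $m$ edges. For a positive integer $d$, a $d$-pathset of a two-terminal graph $G$ is a spanning subgraph of $G$ containing a path of length (number of edges) at most $d$ joining $s$ and $t$; $N_i^d(G)$ is the number of $d$-pathsets of $G$ with exactly $i$ edges. For $\rho\in[0,1]$, $R_G^d(\rho)$ is the probability that the random spanning subgraph obtained from $G$ by deleting each edge independently with probability $\rho$ is a $d$-pathset; equivalently $R_G^d(\rho)=\sum_{i=1}^m N_i^d(G)(1-\rho)^i\rho^{m-i}$. $G\in T_{n,m}$ is a $d$-locally most reliable two-terminal graph near $1$ if there exists $\delta>0$ such that $R_G^d(\rho)\geq R_H^d(\rho)$ for every $H\in T_{n,m}$ and every $\rho\in(1-\delta,1)$. Define $T_{n,m}^d(0)=T_{n,m}$ and, for $i\in\{0,1,\ldots,m-1\}$, $T_{n,m}^d(i+1)=\{G\in T_{n,m}^d(i): N_{i+1}^d(G)\geq N_{i+1}^d(H)\text{ for all }H\in T_{n,m}^d(i)\}$. *)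

(* Defs.v *)
From HB Require Import structures.
From mathcomp Require Import all_boot all_order all_algebra.
From mathcomp Require Import fingroup perm.
From mathcomp Require Import reals.
Set Implicit Arguments. Unset Strict Implicit. Unset Printing Implicit Defensive.
Import Order.TTheory GRing.Theory Num.Theory.

(* A two-terminal graph on the vertex set 'I_n, encoded as
   ((edge set, s), t); it is a valid (simple) two-terminal graph when every
   edge is a 2-element vertex set and s != t. *)
Definition ttg (n : nat) := ({set {set 'I_n}} * 'I_n * 'I_n)%type.

Definition edges n (G : ttg n) : {set {set 'I_n}} := G.1.1.
Definition term_s n (G : ttg n) : 'I_n := G.1.2.
Definition term_t n (G : ttg n) : 'I_n := G.2.

Definition valid_ttg n (G : ttg n) : bool :=
  [forall e in edges G, #|e| == 2] && (term_s G != term_t G).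

Definition ttg_iso n (G H : ttg n) : Prop :=
  exists f : {perm 'I_n},
    [set [set f x | x in e] | e : {set 'I_n} in edges G] = edges H /\
    [set f (term_s G); f (term_t G)] = [set term_s H; term_t H].

(* F (a set of edges, i.e. a spanning subgraph) contains a path of length
   (number of edges) at most d joining s and t: a sequence of distinct
   vertices s = v_0, v_1, ..., v_k = t with k <= d and {v_j, v_(j+1)} in F. *)
Definition has_short_path n (d : nat) (s t : 'I_n) (F : {set {set 'I_n}}) : bool :=
  [exists k : 'I_d.+1, [exists p : k.-tuple 'I_n,
     [&& uniq (s :: (p : seq 'I_n)), last s p == t &
         path (fun u v => [set u; v] \in F) s p]]].

Definition Npath n (d i : nat) (G : ttg n) : nat :=
  #|[set F in powerset (edges G) |
       (#|F| == i) && has_short_path d (term_s G) (term_t G) F]|.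

Definition rel {R : realType} n (d : nat) (G : ttg n) (rho : R) : R :=
  let m := #|edges G| in
  (\sum_(1 <= i < m.+1) (Npath d i G)%:R * (1 - rho) ^+ i * rho ^+ (m - i))%R.

Definition is_Tnm n (m : nat) (T : {set ttg n}) : Prop :=
  [/\ (forall G, G \in T -> valid_ttg G /\ #|edges G| = m),
      (forall G, valid_ttg G -> #|edges G| = m -> exists2 H, H \in T & ttg_iso G H)
    & (forall G H, G \in T -> H \in T -> ttg_iso G H -> G = H)].

Definition loc_most_reliable (R : realType) n (d : nat) (T : {set ttg n}) (G : ttg n) : Prop :=
  G \in T /\
  exists2 delta : R, (0 < delta)%R &
    forall H, H \in T -> forall rho : R, (1 - delta < rho)%R -> (rho < 1)%R ->
      (rel d H rho <= rel d G rho)%R.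

Fixpoint Tseq n (d : nat) (T : {set ttg n}) (i : nat) : {set ttg n} :=
  match i with
  | 0 => T
  | i'.+1 => [set G in Tseq d T i' |
               [forall H in Tseq d T i', Npath d i'.+1 H <= Npath d i'.+1 G]]
  end.

(* Main.v *)
Require Import Defs.
From mathcomp Require Import all_boot all_order all_algebra.
From mathcomp Require Import fingroup perm.
From mathcomp Require Import reals.
From mathcomp Require Import ring lra.
Import Order.TTheory GRing.Theory Num.Theory.
Local Open Scope ring_scope.

Lemma bern (R : realFieldType) (x : R) n : 0 <= x -> x <= 1 ->
  1 - n%:R * x <= (1 - x) ^+ n.
Proof.
move=> x0 x1; elim: n => [|n IH]; first by rewrite mul0r subr0 expr0.
have h1 : 0 <= 1 - x by lra.
rewrite exprS; apply: le_trans (ler_wpM2l h1 IH).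
have hn : 0 <= n%:R :> R by [].
rewrite -natr1; nra.
Qed.

Lemma fin_ineq (R : realFieldType) (S cj y z B x M : R) :
  cj * y * (1 - M * x) <= cj * y * z -> - (y * x * B) <= S ->
  0 < y * (cj - x * (cj * M + B)) -> 0 < cj * y * z + S.
Proof. move=> h1 h2 h3; nra. Qed.

Lemma pos_near1 (R : realFieldType) (c : nat -> R) (m j : nat) :
  (0 < j <= m)%N -> (forall i, (0 < i < j)%N -> c i = 0) -> 0 < c j ->
  exists2 delta : R, 0 < delta & forall x : R, 0 < x -> x < delta ->
   0 < \sum_(1 <= i < m.+1) c i * x ^+ i * (1 - x) ^+ (m - i).
Proof.
move=> /andP[j0 jm] cz cj.
set B := \sum_(j.+1 <= i < m.+1) `|c i|.
have B0 : 0 <= B by apply: sumr_ge0 => i _.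
have M0 : 0 <= m%:R :> R by [].
have D0 : 0 < c j * m%:R + B + 1.
  have : 0 <= c j * m%:R by apply: mulr_ge0 => //; apply: ltW.
  lra.
exists (Num.min (2^-1) (c j / (c j * m%:R + B + 1))).
  by rewrite lt_min invr_gt0 ltr0n /= divr_gt0.
move=> x x0; rewrite lt_min => /andP[xh]; rewrite ltr_pdivlMr // => xD.
have x1 : x <= 1 by lra.
rewrite (big_cat_nat _ (n:=j)) //=; last exact: leqW.
rewrite big_nat_cond big1 ?add0r; last first.
  by move=> i /andP[/andP[i1 ij] _]; rewrite cz ?mul0r // i1.
rewrite big_ltn ?ltnS //.
have hrest : - (x ^+ j * x * B) <= \sum_(j.+1 <= i < m.+1) c i * x ^+ i * (1 - x) ^+ (m - i).
  rewrite /B mulr_sumr -sumrN; apply: ler_sum_nat => i /andP[ji im].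
  set y := c i * x ^+ i * (1 - x) ^+ (m - i).
  have e0 : 0 <= 1 - x by lra.
  have hp : x ^+ i * (1 - x) ^+ (m - i) <= x ^+ j * x.
    rewrite -exprSr -[X in _ <= X]mulr1; apply: ler_pM.
    - exact: exprn_ge0 (ltW x0).
    - exact: exprn_ge0.
    - exact: ler_wiXn2l (ltW x0) x1 _ _ ji.
    - by apply: exprn_ile1; lra.
  have : `|y| <= x ^+ j * x * `|c i|.
    rewrite mulrC /y -mulrA normrM; apply: ler_wpM2l => //.
    by rewrite ger0_norm // mulr_ge0 // exprn_ge0 // ltW.
  by rewrite ler_norml => /andP[].
set y := x ^+ j. have y0 : 0 < y by rewrite exprn_gt0.
set z := (1 - x) ^+ (m - j).
have hz : 1 - m%:R * x <= z.
  apply: (le_trans _ (@bern _ x (m - j) (ltW x0) x1)).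
  rewrite lerD2l lerN2; apply: ler_wpM2r; first exact: ltW.
  by rewrite ler_nat leq_subr.
have h : c j * y * (1 - m%:R * x) <= c j * y * z.
  apply: ler_wpM2l => //; apply: mulr_ge0; apply: ltW => //.
have h2 : 0 < c j - x * (c j * m%:R + B).
  have key : forall (b cc M : R), x * (cc * M + b + 1) < cc -> 0 < cc - x * (cc * M + b).
    have x0p : 0 < x by exact: x0.
    move: x0p; clear; move=> x0 b cc M; lra.
  exact: key.
have h3 : 0 < y * (c j - x * (c j * m%:R + B)) by apply: mulr_gt0.
exact: (@fin_ineq _ _ (c j) y z B x (m%:R) h hrest h3).
Qed.

Section Comb.
Variables (n d : nat) (T : {set ttg n}).

Lemma Tseq_mono i k : (i <= k)%N -> Tseq d T k \subset Tseq d T i.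
Proof.
elim: k => [|k IH]; first by rewrite leqn0 => /eqP ->.
rewrite leq_eqVlt => /orP[/eqP -> //|]; rewrite ltnS => /IH sub.
apply: subset_trans sub; apply/subsetP => G; rewrite /= inE => /andP[] //.
Qed.

Lemma Tseq_T k G : G \in Tseq d T k -> G \in T.
Proof. by move/(subsetP (@Tseq_mono 0 k (leq0n k))). Qed.

Lemma Tseq_eq k G H l : G \in Tseq d T k -> H \in Tseq d T k -> (0 < l <= k)%N ->
  Npath d l G = Npath d l H.
Proof.
move=> Gk Hk /andP[]; case: l => // l _ lk.
move: (subsetP (Tseq_mono _ _ lk) _ Gk) (subsetP (Tseq_mono _ _ lk) _ Hk).
rewrite /= !inE => /andP[Gl /forallP fG] /andP[Hl /forallP fH].
apply/eqP; rewrite eqn_leq.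
by move: (fG H) (fH G); rewrite Gl Hl /= => -> ->.
Qed.

Lemma Tseq_ne k : T != set0 -> Tseq d T k != set0.
Proof.
move=> Tne; elim: k => [//|k IH].
have /set0Pn [G0 G0in] := IH.
case: (@arg_maxnP _ G0 (mem (Tseq d T k)) (Npath d k.+1) G0in) => Gm Gmin Gmax.
apply/set0Pn; exists Gm; rewrite /= inE; apply/andP; split; first exact: Gmin.
by apply/forallP => H; apply/implyP => /Gmax.
Qed.

Lemma Tseq_in k G H : G \in Tseq d T k -> H \in T ->
  (forall l, (0 < l <= k)%N -> Npath d l H = Npath d l G) -> H \in Tseq d T k.
Proof.
elim: k => [//|k IH] Gk HT hl.
move: Gk; rewrite /= !inE => /andP[Gk /forallP fG].
have Hk : H \in Tseq d T k.
  apply: IH => // l /andP[l0 lk]; apply: hl; rewrite l0 /=; exact: leqW.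
rewrite Hk /=; apply/forallP => H'; apply/implyP => H'k.
by rewrite hl ?leqnn //; move: (fG H'); rewrite H'k.
Qed.

End Comb.
Arguments Tseq_mono {n d T i k}.
Arguments Tseq_T {n d T k G}.
Arguments Tseq_eq {n d T k G H l}.
Arguments Tseq_in {n d T k G H}.

Lemma rel_diff (R : realType) n d m (G H : ttg n) (rho : R) :
  #|edges G| = m -> #|edges H| = m ->
  Defs.rel d H rho - Defs.rel d G rho =
  \sum_(1 <= i < m.+1) ((Npath d i H)%:R - (Npath d i G)%:R) * (1 - rho) ^+ i * rho ^+ (m - i).
Proof.
move=> eG eH; rewrite /Defs.rel eG eH -sumrB; apply: eq_bigr => i _.
by rewrite !mulrBl.
Qed.

Lemma strict_near1 (R : realType) n d m (G H : ttg n) j :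
  #|edges G| = m -> #|edges H| = m -> (0 < j <= m)%N ->
  (forall i, (0 < i < j)%N -> Npath d i G = Npath d i H) ->
  (Npath d j G < Npath d j H)%N ->
  exists2 delta : R, 0 < delta & forall rho, 1 - delta < rho -> rho < 1 ->
    Defs.rel d G rho < Defs.rel d H rho.
Proof.
move=> eG eH jm heq lt.
have [dl dl0 hdl] := @pos_near1 R (fun i => (Npath d i H)%:R - (Npath d i G)%:R) m j jm
  (fun i hi => ltac:(by rewrite /= heq // subrr)) ltac:(by rewrite /= subr_gt0 ltr_nat).
exists dl => // rho h1 h2.
rewrite -subr_gt0 (@rel_diff R n d m G H rho eG eH).
have := hdl (1 - rho); rewrite subKr; apply; lra.
Qed.

Lemma fin_delta (R : realType) (A : eqType) (P : A -> R -> Prop) (s : seq A) :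
  (forall H d1 d2, 0 < d1 -> d1 <= d2 -> P H d2 -> P H d1) ->
  (forall H, H \in s -> exists2 dl, 0 < dl & P H dl) ->
  exists2 dl, 0 < dl & forall H, H \in s -> P H dl.
Proof.
move=> mono; elim: s => [|a s IH] h.
  by exists 1 => //.
have [d1 d10 h1] := IH (fun H Hs => h H ltac:(by rewrite inE Hs orbT)).
have [d2 d20 h2] := h a (mem_head _ _).
exists (Num.min d1 d2); first by rewrite lt_min d10 d20.
move=> H; rewrite inE => /orP[/eqP ->|Hs].
  by apply: mono h2; rewrite ?lt_min ?d10 ?d20 // ge_min lexx orbT.
by apply: (mono _ _ _ _ _ (h1 H Hs)); rewrite ?lt_min ?d10 ?d20 // ge_min lexx.
Qed.

Local Close Scope ring_scope.

Theorem lemma1 (R : realType) (d n m : nat) (T : {set ttg n}) :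
  0 < d -> is_Tnm m T -> T != set0 ->
  (exists G, loc_most_reliable R d T G) /\
  (forall G, loc_most_reliable R d T G <-> G \in Tseq d T m).
Proof.
Local Open Scope ring_scope.
move=> d0 [hT _ _] Tne.
have fwd : forall G, G \in Tseq d T m -> loc_most_reliable R d T G.
  move=> G GT; have GinT := Tseq_T GT.
  have eG := (hT G GinT).2.
  split => //.
  suff [dl dl0 hdl] : exists2 dl : R, 0 < dl & forall H, H \in enum T ->
      forall rho : R, 1 - dl < rho -> rho < 1 -> Defs.rel d H rho <= Defs.rel d G rho.
    by exists dl => // H HT; apply: hdl; rewrite mem_enum.
  apply: (@fin_delta R _ (fun H dl => forall rho : R, 1 - dl < rho -> rho < 1 ->
      Defs.rel d H rho <= Defs.rel d G rho)).
    by move=> H d1 d2 d10 d12 P rho h1 h2; apply: P => //; lra.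
  move=> H; rewrite mem_enum => HT.
  have eH := (hT H HT).2.
  case: (boolP [exists l : 'I_m.+1, (0 < l)%N && (Npath d l H != Npath d l G)]).
    move=> /existsP [l0 /andP[l00 nl0]].
    have exP : exists l, (0 < l <= m)%N && (Npath d l H != Npath d l G).
      by exists l0; rewrite l00 nl0 -ltnS ltn_ord.
    case: (ex_minnP exP) => j /andP[/andP[j0 jm] neq] jmin.
    have below : forall i, (0 < i < j)%N -> Npath d i H = Npath d i G.
      move=> i /andP[i0 ij]; apply/eqP; apply/negP => /negP ne.
      have := jmin i; rewrite i0 ne (leq_trans (ltnW ij) jm) /= => /(_ isT).
      by rewrite leqNgt ij.
    have Gj1 : G \in Tseq d T j.-1 := subsetP (Tseq_mono (leq_trans (leq_pred j) jm)) _ GT.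
    have Hj1 : H \in Tseq d T j.-1.
      apply: (Tseq_in Gj1 HT) => l /andP[lp lj]; apply: below.
      by rewrite lp /=; rewrite (leq_ltn_trans lj) // prednK.
    have Gj : G \in Tseq d T j := subsetP (Tseq_mono jm) _ GT.
    have le : (Npath d j H <= Npath d j G)%N.
      move: Gj; rewrite -(prednK j0) /= inE => /andP[_ /forallP /(_ H)].
      by rewrite Hj1.
    have lt : (Npath d j H < Npath d j G)%N by rewrite ltn_neqAle neq le.
    have [dl dl0 hdl] := @strict_near1 R n d m H G j eH eG (introT andP (conj j0 jm)) below lt.
    by exists dl => // rho h1 h2; apply: ltW; apply: hdl.
  rewrite negb_exists => /forallP hall.
  exists 1 => // rho _ _.
  rewrite /Defs.rel eG eH le_eqVlt; apply/orP; left; apply/eqP.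
  apply: eq_big_nat => i /andP[i0 im].
  have := hall (Ordinal im); rewrite /= i0 /= negbK => /eqP -> //.
split.
  have /set0Pn [G0 G0in] := @Tseq_ne n d T m Tne.
  by exists G0; apply: fwd.
move=> G; split; last exact: fwd.
case=> GT [dl dl0 hdl].
apply/negPn/negP => Gn.
have exP : exists k, G \notin Tseq d T k by exists m.
case: (ex_minnP exP) => k Gk kmin.
have km : (k <= m)%N by apply: kmin.
case: k Gk kmin km => [|k] Gk kmin km; first by rewrite /= GT in Gk.
have Gk' : G \in Tseq d T k.
  by apply/negPn/negP => h; have := kmin k h; rewrite ltnn.
move: Gk; rewrite /= inE Gk' /= => /forallPn [H]; rewrite negb_imply -ltnNge => /andP[Hk lt].
have HT := Tseq_T Hk.
have [dl' dl0' hdl'] := @strict_near1 R n d m G H k.+1 (hT G GT).2 (hT H HT).2 km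
  (fun i hi => @Tseq_eq n d T k G H i Gk' Hk ltac:(by case/andP: hi => ip ik; rewrite ip)) lt.
set e := Num.min dl dl'.
have e0 : 0 < e by rewrite lt_min dl0 dl0'.
have e1 : e <= dl by rewrite ge_min lexx.
have e2 : e <= dl' by rewrite ge_min lexx orbT.
have r1 : 1 - dl < 1 - e / 2 by lra.
have r2 : 1 - dl' < 1 - e / 2 by lra.
have r3 : 1 - e / 2 < 1 by lra.
have := hdl H HT _ r1 r3; have := hdl' _ r2 r3; lra.
Qed.
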